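(* Let $V$ be a vector space over a field $F$, let $T:V\to V$ (not necessarily linear) have a vanishing polynomial of degree $m$, and let $T_1:V\to V$ satisfy $T_1^l=T^k$ for integers $k\ge0$, $l\ge1$. Then $T_1$ has a vanishing polynomial of degree at most $ml$.
   Context: For $T:V\to V$ (not necessarily linear), $T^0=I$, $T^i=T\circ T^{i-1}$, and $p(T)(v)=\sum a_iT^i(v)$ for $p(x)=\sum a_ix^i$. A vanishing polynomial of $T$ is a nonzero $p\in F[x]$ with $p(T)(v)=0$ for all $v\in V$. *)

(* Defs.v *)
From HB Require Import structures.
From mathcomp Require Import all_boot all_order all_algebra.
Set Implicit Arguments. Unset Strict Implicit. Unset Printing Implicit Defensive.
Import GRing.Theory.
Local Open Scope ring_scope.

Definition poly_app (F : fieldType) (V : lmodType F) (p : {poly F}) (T : V -> V) (v : V) : V :=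
  \sum_(i < size p) p`_i *: iter i T v.

Definition vanishing_poly (F : fieldType) (V : lmodType F) (T : V -> V) (p : {poly F}) : Prop :=
  p != 0 /\ forall v : V, poly_app p T v = 0.

(* Main.v *)
Require Import Defs.
From HB Require Import structures.
From mathcomp Require Import all_boot all_order all_algebra.
Import GRing.Theory.
Local Open Scope ring_scope.

Section Ev.
Variables (F : fieldType) (V : lmodType F).

Definition ev (p : {poly F}) (f : nat -> V) : V := \sum_(i < size p) p`_i *: f i.

Lemma ev_widen (p : {poly F}) (f : nat -> V) N : (size p <= N)%N -> ev p f = \sum_(i < N) p`_i *: f i.
Proof.
move=> h; rewrite /ev (big_ord_widen _ (fun i => p`_i *: f i) h) big_mkcond /=; apply: eq_bigr => i _.
case: ifP => // /negbT; rewrite -leqNgt => h2; by rewrite nth_default // scale0r.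
Qed.

Lemma ev_add (p q : {poly F}) (f : nat -> V) : ev (p + q) f = ev p f + ev q f.
Proof.
rewrite !(@ev_widen _ _ (maxn (size p) (size q))) ?leq_maxl ?leq_maxr ?size_polyD //.
rewrite -big_split /=; apply: eq_bigr => i _; by rewrite coefD scalerDl.
Qed.

Lemma ev0 (f : nat -> V) : ev 0 f = 0.
Proof. by rewrite /ev size_poly0 big_ord0. Qed.

Lemma ev_scale c (p : {poly F}) (f : nat -> V) : ev (c *: p) f = c *: ev p f.
Proof.
rewrite !(@ev_widen _ _ (size p)) ?size_scale_leq // scaler_sumr.
apply: eq_bigr => i _; by rewrite coefZ scalerA.
Qed.

Lemma ev_sum n (P : 'I_n -> {poly F}) (f : nat -> V) :
  ev (\sum_(i < n) P i) f = \sum_(i < n) ev (P i) f.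
Proof. exact: (big_morph (fun p => ev p f) (fun p q => ev_add p q f) (ev0 f)). Qed.

Lemma ev_Xn n (f : nat -> V) : ev 'X^n f = f n.
Proof.
rewrite (@ev_widen _ _ n.+1) ?size_polyXn // big_ord_recr /= coefXn eqxx scale1r.
rewrite big1 ?add0r // => i _; by rewrite coefXn (ltn_eqF (ltn_ord i)) scale0r.
Qed.

Lemma ev_ext (p : {poly F}) (f g : nat -> V) : (forall i, f i = g i) -> ev p f = ev p g.
Proof. move=> h; apply: eq_bigr => i _; by rewrite h. Qed.

Lemma ev_X (p : {poly F}) (f : nat -> V) : ev ('X * p) f = ev p (fun i => f i.+1).
Proof.
rewrite (@ev_widen _ _ (size p).+1); last first.
  apply: leq_trans (size_polyMleq _ _) _; by rewrite size_polyX.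
rewrite big_ord_recl coefXM /= scale0r add0r /ev; apply: eq_bigr => i _.
by rewrite coefXM.
Qed.

Lemma ev_XnM (T : V -> V) (p : {poly F}) j w :
  ev ('X^j * p) (fun i => iter i T w) = ev p (fun i => iter i T (iter j T w)).
Proof.
elim: j w => [|j IH] w; first by rewrite expr0 mul1r.
rewrite exprS -mulrA ev_X.
rewrite (@ev_ext _ _ (fun i => iter i T (T w))); last by move=> i; rewrite iterSr.
rewrite IH; apply: ev_ext => i; by rewrite iterSr.
Qed.

Lemma ev_mulp (T : V -> V) (s p : {poly F}) v :
  (forall w, ev p (fun i => iter i T w) = 0) -> ev (s * p) (fun i => iter i T v) = 0.
Proof.
move=> H; rewrite -[s]coefK poly_def mulr_suml ev_sum big1 // => j _.
by rewrite -scalerAl ev_scale ev_XnM H scaler0.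
Qed.

End Ev.
Arguments ev {F V}.

Lemma iter_mul (V : Type) (T T1 : V -> V) k l v :
  (forall v, iter l T1 v = iter k T v) -> forall n, iter (l * n) T1 v = iter (k * n) T v.
Proof.
move=> h; elim=> [|n IH]; first by rewrite !muln0.
by rewrite !mulnS !iterD IH h.
Qed.

Theorem mainTheorem17 (F : fieldType) (V : lmodType F) (T T1 : V -> V)
    (m k l : nat) (p : {poly F}) :
  vanishing_poly T p -> (size p).-1 = m ->
  (0 < l)%N -> (forall v : V, iter l T1 v = iter k T v) ->
  exists q : {poly F}, vanishing_poly T1 q /\ ((size q).-1 <= m * l)%N.
Proof.
move=> [pn0 pv] hm l0 hTT.
have szp : size p = m.+1.
  by rewrite -hm prednK // lt0n size_poly_eq0.
pose A : 'M[F]_(m.+1, m) := \matrix_(i, j) (('X^(k * i) %% p)`_j).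
pose K := kermx A.
have Kn0 : K != 0.
  rewrite -mxrank_eq0 /K mxrank_ker subn_eq0 -ltnNge.
  by apply: leq_ltn_trans (rank_leq_col A) _.
have [i0 [j0 Kij]] : exists i j, K i j != 0.
  case/boolP: [exists i, [exists j, K i j != 0]] => [/existsP [i /existsP [j h]]|/existsPn h].
    by exists i, j.
  exfalso; move/eqP: Kn0; apply; apply/matrixP => i j.
  by move/existsPn: (h i) => /(_ j) /negbNE /eqP ->; rewrite mxE.
pose u := fun n : 'I_m.+1 => K i0 n.
have uA : forall j : 'I_m, \sum_(n < m.+1) u n * A n j = 0.
  move=> j; have := congr1 (fun M : 'M[F]_(m.+1, m) => M i0 j) (mulmx_ker A).
  by rewrite !mxE => e; exact: e.
pose Bk : {poly F} := \sum_(n < m.+1) u n *: 'X^(k * n).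
have Bkmod : Bk %% p = 0.
  apply/polyP => j; rewrite coef0.
  have hs : (size (Bk %% p)%R < m.+1)%N by rewrite -szp ltn_modp.
  case: (ltnP j m) => hj; last by rewrite nth_default // (leq_trans _ hj) // -ltnS.
  have e : forall (n' : nat) (P : 'I_n' -> {poly F}), (\sum_(n < n') P n) %% p = \sum_(n < n') (P n %% p).
    move=> n' P; elim/big_rec2: _ => [|i y1 y2 _ <-]; first by rewrite mod0p.
    by rewrite modpD.
  rewrite e coef_sum; apply: etrans (uA (Ordinal hj)); apply: eq_bigr => n _.
  by rewrite modpZl coefZ mxE.
have BkV : forall v, ev Bk (fun i => iter i T v) = 0.
  move=> v; rewrite (divp_eq Bk p) Bkmod addr0; apply: ev_mulp => w; exact: pv.
pose q : {poly F} := \sum_(n < m.+1) u n *: 'X^(l * n).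
have qc : forall j : nat, q`_j = \sum_(n < m.+1) u n * (j == l * n)%:R.
  move=> j; rewrite coef_sum; apply: eq_bigr => n _; by rewrite coefZ coefXn.
exists q; split; [split|].
- apply/eqP => q0; move/eqP: Kij; apply.
  have := qc (l * j0); rewrite q0 coef0 (bigD1 j0) //= eqxx mulr1 big1 ?addr0.
    by move=> e; rewrite /u in e; rewrite -e.
  move=> n hn; rewrite eqn_pmul2l //; case: eqP => [/val_inj e|_]; [by rewrite e eqxx in hn | by rewrite mulr0].
- move=> v; rewrite /poly_app.
  change (ev q (fun i => iter i T1 v) = 0).
  rewrite ev_sum; apply: etrans (BkV v); rewrite ev_sum; apply: eq_bigr => n _.
  by rewrite !ev_scale !ev_Xn (@iter_mul _ T T1 k l v hTT).
- have hs : (size q <= (m * l).+1)%N; last by move: hs; case: (size q).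
  apply/leq_sizeP => j hj; rewrite qc big1 // => n _.
  suff : j != (l * n)%N by move/negbTE ->; rewrite mulr0.
  apply: contraTneq hj => ->; rewrite -ltnNge ltnS mulnC leq_mul2r.
  by rewrite -ltnS ltn_ord orbT.
Qed.
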